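(* Let $p$ be a propositional symbol. The formula $\Diamond p\to\Diamond(p\wedge\Box\neg p)$ is not valid in $\mathsf{BIGL}$: there is a model $\mathcal B\in\mathsf{BIGL}$ and a world $w$ with $\mathcal B,w\not\models\Diamond p\to\Diamond(p\wedge\Box\neg p)$. Consequently $\mathsf{labIGL}\not\vdash x:\Diamond p\to\Diamond(p\wedge\Box\neg p)$.
   Context: $\neg A := A\to\bot$. A birelational model $\mathcal B=(W,\le,R^{\mathcal B},V)$: nonempty $W$, partial order $\le$, $R^{\mathcal B}\subseteq W^2$ with (F1) if $w\le w'$ and $wR^{\mathcal B}v$ then $v\le v'$ and $w'R^{\mathcal B}v'$ for some $v'$; (F2) if $wR^{\mathcal B}v$ and $v\le v'$ then $w\le w'$ and $w'R^{\mathcal B}v'$ for some $w'$; $V:W\to\mathcal P(\mathsf{Pr})$ monotone in $\le$. Satisfaction: $w\models p$ iff $p\in V(w)$; $\bot$ never; $\wedge,\vee$ pointwise; $w\models A\to B$ iff for all $w'\ge w$, $w'\models A$ implies $w'\models B$; $w\models\Box A$ iff for all $w'\ge w$ and $v$ with $w'R^{\mathcal B}v$, $v\models A$; $w\models\Diamond A$ iff some $v$ with $wR^{\mathcal B}v$ satisfies $A$. $\mathsf{BIGL}$: birelational models with $R^{\mathcal B}$ transitive and no infinite chain $x_1\le y_1R^{\mathcal B}x_2\le y_2R^{\mathcal B}\cdots$. $\mathsf{labIGL}$: the class of $\infty$-proofs of $\mathsf{labIK4}$, the single-succedent restriction of the labelled calculus $\mathsf{labK4}$ (Gentzen-style rules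 on labelled formulas $x:A$ with relational atoms $xRy$, modal rules $\Box$R: $\mathcal R,xRy,\Gamma\Rightarrow y:A$ / $\mathcal R,\Gamma\Rightarrow x:\Box A$ ($y$ fresh), $\Box$L: $\mathcal R,xRy,\Gamma,y:A\Rightarrow C$ / $\mathcal R,xRy,\Gamma,x:\Box A\Rightarrow C$, $\Diamond$L: $\mathcal R,xRy,\Gamma,y:A\Rightarrow C$ / $\mathcal R,\Gamma,x:\Diamond A\Rightarrow C$ ($y$ fresh), $\Diamond$R: $\mathcal R,xRy,\Gamma\Rightarrow y:A$ / $\mathcal R,xRy,\Gamma\Rightarrow x:\Diamond A$, transitivity rule tr, cut, weakening, contraction, thinning, identity on atoms, $\bot$L), where an $\infty$-proof is a possibly infinite derivation tree all of whose infinite branches carry a trace of labels $(x_i)$ with $x_i=x_{i+1}$ or $x_iRx_{i+1}$ in the current relational context, the latter infinitely often. *)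

(* Defs.v *)
From Stdlib Require Import List Arith Permutation.
Import ListNotations.

Inductive form : Type :=
| Var : nat -> form
| Bot : form
| And : form -> form -> form
| Or  : form -> form -> form
| Imp : form -> form -> form
| Box : form -> form
| Dia : form -> form.

Definition Neg (A : form) : form := Imp A Bot.

Record bmodel : Type := BModel {
  W : Type;
  le : W -> W -> Prop;
  rel : W -> W -> Prop;
  val : W -> nat -> Prop
}.

Definition is_birelational (M : bmodel) : Prop :=
  inhabited (W M) /\
  (forall w, le M w w) /\
  (forall u v w, le M u v -> le M v w -> le M u w) /\
  (forall u v, le M u v -> le M v u -> u = v) /\
  (forall w w' v, le M w w' -> rel M w v ->
     exists v', le M v v' /\ rel M w' v') /\
  (forall w v v', rel M w v -> le M v v' ->
     exists w', le M w w' /\ rel M w' v') /\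
  (forall w w' p, le M w w' -> val M w p -> val M w' p).

Definition is_BIGL (M : bmodel) : Prop :=
  is_birelational M /\
  (forall u v w, rel M u v -> rel M v w -> rel M u w) /\
  ~ (exists x y : nat -> W M,
       forall i, le M (x i) (y i) /\ rel M (y i) (x (S i))).

Fixpoint sat (M : bmodel) (w : W M) (A : form) : Prop :=
  match A with
  | Var p => val M w p
  | Bot => False
  | And A B => sat M w A /\ sat M w B
  | Or A B => sat M w A \/ sat M w B
  | Imp A B => forall w', le M w w' -> sat M w' A -> sat M w' B
  | Box A => forall w' v, le M w w' -> rel M w' v -> sat M v A
  | Dia A => exists v, rel M w v /\ sat M v A
  end.

Definition label := nat.
Definition lform : Type := (label * form)%type.
Definition ratom : Type := (label * label)%type.

(* A sequent  R, Gamma => x:C  (contexts as lists; exchange is a rule). *)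
Record sequent : Type := Seq {
  srel : list ratom;
  sctx : list lform;
  sgoal : lform
}.

Definition occurs (x : label) (s : sequent) : Prop :=
  (exists r, In r (srel s) /\ (fst r = x \/ snd r = x)) \/
  (exists a, In a (sctx s) /\ fst a = x) \/
  fst (sgoal s) = x.

Inductive rule : list sequent -> sequent -> Prop :=
| r_exch : forall R R' G G' c,
    Permutation R R' -> Permutation G G' ->
    rule [Seq R' G' c] (Seq R G c)
| r_weak : forall R G a c,
    rule [Seq R G c] (Seq R (a :: G) c)
| r_thin : forall R G r c,
    rule [Seq R G c] (Seq (r :: R) G c)
| r_contr : forall R G a c,
    rule [Seq R (a :: a :: G) c] (Seq R (a :: G) c)
| r_contr_rel : forall R G r c,
    rule [Seq (r :: r :: R) G c] (Seq (r :: R) G c)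
| r_cut : forall R G a c,
    rule [Seq R G a; Seq R (a :: G) c] (Seq R G c)
| r_tr : forall R G x y z c,
    rule [Seq ((x, z) :: (x, y) :: (y, z) :: R) G c]
         (Seq ((x, y) :: (y, z) :: R) G c)
| r_id : forall R G x p,
    rule [] (Seq R ((x, Var p) :: G) (x, Var p))
| r_botL : forall R G x c,
    rule [] (Seq R ((x, Bot) :: G) c)
| r_andL : forall R G x A B c,
    rule [Seq R ((x, A) :: (x, B) :: G) c] (Seq R ((x, And A B) :: G) c)
| r_andR : forall R G x A B,
    rule [Seq R G (x, A); Seq R G (x, B)] (Seq R G (x, And A B))
| r_orL : forall R G x A B c,
    rule [Seq R ((x, A) :: G) c; Seq R ((x, B) :: G) c]
         (Seq R ((x, Or A B) :: G) c)
| r_orR1 : forall R G x A B,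
    rule [Seq R G (x, A)] (Seq R G (x, Or A B))
| r_orR2 : forall R G x A B,
    rule [Seq R G (x, B)] (Seq R G (x, Or A B))
| r_impL : forall R G x A B c,
    rule [Seq R G (x, A); Seq R ((x, B) :: G) c]
         (Seq R ((x, Imp A B) :: G) c)
| r_impR : forall R G x A B,
    rule [Seq R ((x, A) :: G) (x, B)] (Seq R G (x, Imp A B))
| r_boxR : forall R G x y A,
    ~ occurs y (Seq R G (x, Box A)) ->
    rule [Seq ((x, y) :: R) G (y, A)] (Seq R G (x, Box A))
| r_boxL : forall R G x y A c,
    rule [Seq ((x, y) :: R) ((y, A) :: G) c]
         (Seq ((x, y) :: R) ((x, Box A) :: G) c)
| r_diaL : forall R G x y A c,
    ~ occurs y (Seq R ((x, Dia A) :: G) c) ->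
    rule [Seq ((x, y) :: R) ((y, A) :: G) c] (Seq R ((x, Dia A) :: G) c)
| r_diaR : forall R G x y A,
    rule [Seq ((x, y) :: R) G (y, A)] (Seq ((x, y) :: R) G (x, Dia A)).

(* Nodes are addressed by positions: lists of child indices, the most
   recent choice at the head ([i :: p] is the i-th child of [p]). *)
Record ptree : Type := PTree {
  node : list nat -> sequent;
  nchildren : list nat -> nat
}.

Fixpoint valid_pos (T : ptree) (p : list nat) : Prop :=
  match p with
  | [] => True
  | i :: q => valid_pos T q /\ i < nchildren T q
  end.

Definition locally_correct (T : ptree) : Prop :=
  forall p, valid_pos T p ->
    rule (map (fun i => node T (i :: p)) (seq 0 (nchildren T p))) (node T p).

Fixpoint branch_pos (b : nat -> nat) (n : nat) : list nat :=
  match n with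
  | 0 => []
  | S m => b m :: branch_pos b m
  end.

Definition is_branch (T : ptree) (b : nat -> nat) : Prop :=
  forall n, b n < nchildren T (branch_pos b n).

Definition has_trace (T : ptree) (b : nat -> nat) : Prop :=
  let s := fun n => node T (branch_pos b n) in
  exists (k : nat) (x : nat -> label),
    (forall n, k <= n -> occurs (x n) (s n)) /\
    (forall n, k <= n ->
        x (S n) = x n \/ In (x n, x (S n)) (srel (s (S n)))) /\
    (forall m, exists n, m <= n /\ k <= n /\
        In (x n, x (S n)) (srel (s (S n)))).

Definition inf_proof (T : ptree) : Prop :=
  locally_correct T /\ forall b, is_branch T b -> has_trace T b.

Definition labIGL_provable (s : sequent) : Prop :=
  exists T, inf_proof T /\ node T [] = s.

Definition phi16 (p : nat) : form :=
  Imp (Dia (Var p)) (Dia (And (Var p) (Box (Neg (Var p))))).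

(* Main.v *)
Require Import Defs.
From Stdlib Require Import List Arith Permutation Classical ClassicalEpsilon Lia.
Import ListNotations.

Inductive wd : Type := Ww | Ws | Vv | Vs | Uu.

Definition leW (a b : wd) : Prop :=
  match a, b with
  | Ww, Ww | Ww, Ws | Ws, Ws | Vv, Vv | Vv, Vs | Vs, Vs | Uu, Uu => True
  | _, _ => False end.
Definition relW (a b : wd) : Prop :=
  match a, b with
  | Ww, Vv | Ws, Vs | Ws, Uu | Vs, Uu => True
  | _, _ => False end.
Definition valW (a : wd) (n : nat) : Prop :=
  match a with Vv | Vs | Uu => True | _ => False end.
Definition hW (a : wd) : nat :=
  match a with Ww | Ws => 2 | Vv | Vs => 1 | Uu => 0 end.
Definition LW (a : wd) : wd :=
  match a with Ww => Ws | Vv => Vs | x => x end.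

Definition M0 : bmodel := BModel wd leW relW valW.

Ltac pick := first [ solve [exists Ww; simpl; auto] | solve [exists Ws; simpl; auto]
  | solve [exists Vv; simpl; auto] | solve [exists Vs; simpl; auto] | solve [exists Uu; simpl; auto]].

Lemma M0_bir : is_birelational M0.
Proof.
  unfold is_birelational; simpl; repeat split.
  - exact Ww.
  - intros []; simpl; auto.
  - intros [] [] []; simpl; tauto.
  - intros [] []; simpl; tauto.
  - intros [] [] []; simpl; intros; try tauto; pick.
  - intros [] [] []; simpl; intros; try tauto; pick.
  - intros [] [] ?; simpl; tauto.
Qed.

Lemma M0_trans : forall u v w, relW u v -> relW v w -> relW u w.
Proof. intros [] [] []; simpl; tauto. Qed.

Lemma h_rel : forall a b, relW a b -> hW b < hW a.
Proof. intros [] []; simpl; try tauto; intros; lia. Qed.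

Lemma M0_BIGL : is_BIGL M0.
Proof.
  split; [exact M0_bir|]. split; [exact M0_trans|].
  intros [x [y H]]; simpl in *.
  assert (Hd : forall i, hW (x (S i)) < hW (x i)).
  { intros i; destruct (H i) as [H1 H2].
    apply h_rel in H2. destruct (x i), (y i); simpl in *; try tauto; lia. }
  assert (forall n, hW (x n) + n <= hW (x 0)).
  { induction n; [lia|]. specialize (Hd n). lia. }
  specialize (H0 3). destruct (x 0); simpl in H0; lia.
Qed.

Lemma sat_mono (M : bmodel) (HB : is_birelational M) :
  forall A w w', le M w w' -> sat M w A -> sat M w' A.
Proof.
  destruct HB as [_ [Hr [Ht [_ [F1 [F2 Hv]]]]]].
  induction A; simpl; intros w w' Hle H; eauto.
  - destruct H; split; eauto.
  - destruct H; [left|right]; eauto.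
  - destruct H as [v [Hv1 Hv2]]. destruct (F1 _ _ _ Hle Hv1) as [v' [H1 H2]].
    exists v'; split; eauto.
Qed.

Definition refuted (s : sequent) (f : label -> wd) : Prop :=
  (forall a b, In (a, b) (srel s) -> relW (f a) (f b)) /\
  (forall z A, In (z, A) (sctx s) -> sat M0 (f z) A) /\
  ~ sat M0 (f (fst (sgoal s))) (snd (sgoal s)).

Definition compat (f f' : label -> wd) (s : sequent) : Prop :=
  forall z, occurs z s -> hW (f' z) = hW (f z).

Definition upd (f : label -> wd) (y : label) (v : wd) : label -> wd :=
  fun z => if Nat.eqb z y then v else f z.

Lemma upd_neq f y v z : z <> y -> upd f y v z = f z.
Proof. intro H. unfold upd. apply Nat.eqb_neq in H. now rewrite H. Qed.
Lemma upd_eq f y v : upd f y v y = v.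
Proof. unfold upd. now rewrite Nat.eqb_refl. Qed.

Lemma lift_ex (f : label -> wd) x w' : leW (f x) w' ->
  exists g, g x = w' /\ (forall a b, relW (f a) (f b) -> relW (g a) (g b)) /\
    (forall z, leW (f z) (g z)) /\ (forall z, hW (g z) = hW (f z)).
Proof.
  intros H.
  assert (E : w' = f x \/ w' = LW (f x)).
  { destruct (f x), w'; simpl in *; tauto. }
  destruct E as [E|E].
  - exists f; repeat split; auto. intros z; destruct (f z); simpl; auto.
  - exists (fun z => LW (f z)); repeat split; auto.
    + intros a b; destruct (f a), (f b); simpl; tauto.
    + intros z; destruct (f z); simpl; auto.
    + intros z; destruct (f z); simpl; auto.
Qed.

Lemma mono0 : forall A a b, leW a b -> sat M0 a A -> sat M0 b A.
Proof. intros. eapply (sat_mono M0 M0_bir); eauto. Qed.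

Ltac same_f s := exists s; eexists; split; [simpl; auto|]; split;
  [|intros ? ?; reflexivity].

Lemma sound_rule prems c f : rule prems c -> refuted c f ->
  exists s f', In s prems /\ refuted s f' /\ compat f f' c.
Proof.
  intros Hr Hc; destruct Hr; destruct Hc as [HR [HG Hg]]; simpl in *.
  - same_f (Seq R' G' c). repeat split; simpl; auto.
    + intros a b H1; apply HR; eapply Permutation_in; [apply Permutation_sym|]; eauto.
    + intros z A H1; apply HG; eapply Permutation_in; [apply Permutation_sym|]; eauto.
  - same_f (Seq R G c). repeat split; simpl; auto.
  - same_f (Seq R G c). repeat split; simpl; auto.
  - same_f (Seq R (a :: a :: G) c). repeat split; simpl; auto.
    intros z A [H|[H|H]]; apply HG; simpl; auto.
  - same_f (Seq (r :: r :: R) G c). repeat split; simpl; auto.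
    intros z A [H|[H|H]]; apply HR; simpl; auto.
  - destruct a as [z A].
    destruct (classic (sat M0 (f z) A)) as [HA|HA].
    + exists (Seq R ((z, A) :: G) c), f; split; [simpl; auto|].
      split; [|intros ? ?; reflexivity]. repeat split; simpl; auto.
      intros z' A' [H|H]; [inversion H; subst; auto| auto].
    + exists (Seq R G (z, A)), f; split; [simpl; auto|].
      split; [|intros ? ?; reflexivity]. repeat split; simpl; auto.
  - same_f (Seq ((x, z) :: (x, y) :: (y, z) :: R) G c). repeat split; simpl; auto.
    intros a b [H|H]; [inversion H; subst|apply HR; auto].
    eapply M0_trans; apply HR; simpl; auto.
  - exfalso. apply Hg. exact (HG x (Var p) (or_introl eq_refl)).
  - exfalso. exact (HG x Bot (or_introl eq_refl)).
  - same_f (Seq R ((x, A) :: (x, B) :: G) c). repeat split; simpl; auto.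
    destruct (HG x (And A B) (or_introl eq_refl)) as [HA HB].
    intros z C [H|[H|H]]; try (inversion H; subst; auto; fail); apply HG; auto.
  - destruct (classic (sat M0 (f x) A)) as [HA|HA].
    + exists (Seq R G (x, B)), f; split; [simpl; auto|].
      split; [|intros ? ?; reflexivity]. repeat split; simpl; auto.
    + exists (Seq R G (x, A)), f; split; [simpl; auto|].
      split; [|intros ? ?; reflexivity]. repeat split; simpl; auto.
  - destruct (HG x (Or A B) (or_introl eq_refl)) as [HA|HB].
    + exists (Seq R ((x, A) :: G) c), f; split; [simpl; auto|].
      split; [|intros ? ?; reflexivity]. repeat split; simpl; auto.
      intros z C [H|H]; [inversion H; subst; auto|apply HG; auto].
    + exists (Seq R ((x, B) :: G) c), f; split; [simpl; auto|].
      split; [|intros ? ?; reflexivity]. repeat split; simpl; auto.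
      intros z C [H|H]; [inversion H; subst; auto|apply HG; auto].
  - same_f (Seq R G (x, A)). repeat split; simpl; auto.
  - same_f (Seq R G (x, B)). repeat split; simpl; auto.
  - pose proof (HG x (Imp A B) (or_introl eq_refl)) as HI. simpl in HI.
    destruct (classic (sat M0 (f x) A)) as [HA|HA].
    + exists (Seq R ((x, B) :: G) c), f; split; [simpl; auto|].
      split; [|intros ? ?; reflexivity]. repeat split; simpl; auto.
      intros z C [H|H]; [inversion H; subst|apply HG; auto].
      apply HI; auto. destruct (f z); simpl; auto.
    + exists (Seq R G (x, A)), f; split; [simpl; auto|].
      split; [|intros ? ?; reflexivity]. repeat split; simpl; auto.
  - assert (exists w', leW (f x) w' /\ sat M0 w' A /\ ~ sat M0 w' B) as [w' [H1 [H2 H3]]].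
    { apply NNPP; intro N; apply Hg; intros w' Hl HA.
      apply NNPP; intro NB; apply N; eauto. }
    destruct (lift_ex f x w' H1) as [g [G1 [G2 [G3 G4]]]].
    exists (Seq R ((x, A) :: G) (x, B)), g; split; [simpl; auto|].
    split; [|intros ? ?; auto]. repeat split; simpl; auto.
    + intros z C [H|H]; [injection H as <- <-; rewrite G1; auto|].
      eapply mono0; [apply G3|]; auto.
    + rewrite G1; auto.
  - assert (exists w' v, leW (f x) w' /\ relW w' v /\ ~ sat M0 v A) as [w' [v [H1 [H2 H3]]]].
    { apply NNPP; intro N; apply Hg; intros w' v Hl Hrl.
      apply NNPP; intro NB; apply N; eauto. }
    destruct (lift_ex f x w' H1) as [g [G1 [G2 [G3 G4]]]].
    assert (Fr1 : forall a b, In (a, b) R -> a <> y /\ b <> y).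
    { intros a b Hab; split; intro E; subst; apply H; left; eexists; split; eauto; simpl; auto. }
    assert (Fr2 : forall z C, In (z, C) G -> z <> y).
    { intros z C Hz E; subst; apply H; right; left; eexists; split; eauto; simpl; auto. }
    assert (Fr3 : x <> y).
    { intro E; subst; apply H; right; right; reflexivity. }
    exists (Seq ((x, y) :: R) G (y, A)), (upd g y v); split; [simpl; auto|].
    split.
    + repeat split; simpl.
      * intros a b [E|E]; [injection E as <- <-|].
        -- rewrite upd_eq, upd_neq by auto. rewrite G1; auto.
        -- destruct (Fr1 a b E). rewrite !upd_neq by auto. apply G2, HR; auto.
      * intros z C Hz. rewrite upd_neq by eauto. eapply mono0; [apply G3|]; auto.
      * rewrite upd_eq; auto.
    + intros z Hz. destruct (Nat.eq_dec z y); [subst; contradiction|].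
      rewrite upd_neq by auto; auto.
  - pose proof (HR x y (or_introl eq_refl)) as Hxy.
    pose proof (HG x (Box A) (or_introl eq_refl)) as HBx. simpl in HBx.
    same_f (Seq ((x, y) :: R) ((y, A) :: G) c). repeat split; simpl; auto.
    intros z C [E|E]; [inversion E; subst|apply HG; auto].
    eapply HBx; eauto. destruct (f x); simpl; auto.
  - destruct (HG x (Dia A) (or_introl eq_refl)) as [v [Hv1 Hv2]].
    assert (Fr1 : forall a b, In (a, b) R -> a <> y /\ b <> y).
    { intros a b Hab; split; intro E; subst; apply H; left; eexists; split; eauto; simpl; auto. }
    assert (Fr2 : forall z C, In (z, C) G -> z <> y).
    { intros z C Hz E; subst; apply H; right; left; eexists; split; [right; eauto|]; simpl; auto. }
    assert (Fr3 : x <> y).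
    { intro E; subst; apply H; right; left; eexists; split; [left; reflexivity|]; reflexivity. }
    assert (Fr4 : fst c <> y).
    { intro E; subst; apply H; right; right; reflexivity. }
    exists (Seq ((x, y) :: R) ((y, A) :: G) c), (upd f y v); split; [simpl; auto|].
    split.
    + repeat split; simpl.
      * intros a b [E|E]; [inversion E; subst|].
        -- rewrite upd_eq, upd_neq by auto. auto.
        -- destruct (Fr1 a b E). rewrite !upd_neq by auto. apply HR; auto.
      * intros z C [E|Hz]; [inversion E; subst; rewrite upd_eq; auto|].
        rewrite upd_neq by eauto. apply HG; auto.
      * rewrite upd_neq by auto; auto.
    + intros z Hz. destruct (Nat.eq_dec z y); [subst; contradiction|].
      rewrite upd_neq by auto; auto.
  - pose proof (HR x y (or_introl eq_refl)) as Hxy.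
    same_f (Seq ((x, y) :: R) G (y, A)). repeat split; simpl; auto.
    intro HA; apply Hg; eauto.
Qed.

Lemma step (T : ptree) : locally_correct T ->
  forall p f, valid_pos T p -> refuted (node T p) f ->
  exists i f', i < nchildren T p /\ refuted (node T (i :: p)) f' /\
    compat f f' (node T p).
Proof.
  intros HT p f Hv Hr.
  destruct (sound_rule _ _ f (HT p Hv) Hr) as [s [f' [Hin [Hr' Hc]]]].
  apply in_map_iff in Hin. destruct Hin as [i [E Hi]]. subst s.
  apply in_seq in Hi. exists i, f'; split; [lia|auto].
Qed.

Lemma not_provable_refuted (s : sequent) (f : label -> wd) :
  refuted s f -> ~ labIGL_provable s.
Proof.
  intros Hr [T [[HT Hbr] Hroot]].
  set (St := (list nat * (label -> wd))%type).
  assert (Hnext : forall st : St, exists r : nat * (label -> wd),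
    valid_pos T (fst st) -> refuted (node T (fst st)) (snd st) ->
    fst r < nchildren T (fst st) /\ refuted (node T (fst r :: fst st)) (snd r) /\
    compat (snd st) (snd r) (node T (fst st))).
  { intros [p g]. simpl.
    destruct (classic (valid_pos T p /\ refuted (node T p) g)) as [[H1 H2]|H].
    - destruct (step T HT p g H1 H2) as [i [f' Hx]]. exists (i, f'); simpl; auto.
    - exists (0, g). intros; exfalso; auto. }
  destruct (choice _ Hnext) as [next Hn].
  set (st := fix st (n : nat) : St :=
         match n with 0 => ([], f)
         | S m => (fst (next (st m)) :: fst (st m), snd (next (st m))) end).
  set (b := fun n => fst (next (st n))).
  assert (Hbp : forall n, branch_pos b n = fst (st n)).
  { induction n; simpl; auto. rewrite IHn. reflexivity. }
  assert (Inv : forall n, valid_pos T (fst (st n)) /\ refuted (node T (fst (st n))) (snd (st n))).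
  { induction n.
    - simpl. rewrite Hroot. auto.
    - destruct IHn as [H1 H2]. destruct (Hn _ H1 H2) as [H3 [H4 H5]].
      simpl. split; auto. }
  assert (Hcomp : forall n, compat (snd (st n)) (snd (st (S n))) (node T (fst (st n)))).
  { intros n. destruct (Inv n) as [H1 H2]. apply (Hn _ H1 H2). }
  assert (Hb : is_branch T b).
  { intros n. rewrite Hbp. destruct (Inv n) as [H1 H2]. apply (Hn _ H1 H2). }
  destruct (Hbr b Hb) as [k [x [Ho [Hs Hinf]]]].
  set (gg := fun n => hW (snd (st n) (x n))).
  assert (Hstep : forall n, k <= n -> gg (S n) <= gg n /\
     (In (x n, x (S n)) (srel (node T (branch_pos b (S n)))) -> gg (S n) < gg n)).
  { intros n Hkn. unfold gg.
    pose proof (Hcomp n (x n)) as Hc. rewrite <- Hbp in Hc. specialize (Hc (Ho n Hkn)).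
    assert (Hrel : In (x n, x (S n)) (srel (node T (branch_pos b (S n)))) ->
              hW (snd (st (S n)) (x (S n))) < hW (snd (st n) (x n))).
    { intros Hin. rewrite Hbp in Hin. destruct (Inv (S n)) as [_ [HR _]].
      apply HR, h_rel in Hin. lia. }
    split; auto.
    destruct (Hs n Hkn) as [E|E]; [rewrite E; lia|]. apply Hrel in E; lia. }
  assert (Hmono : forall m n, k <= m -> m <= n -> gg n <= gg m).
  { intros m n Hm Hmn. induction Hmn; [lia|].
    destruct (Hstep m0); lia. }
  assert (Hfin : forall N m, k <= m -> gg m <= N -> False).
  { induction N; intros m Hm HN.
    - destruct (Hinf m) as [n [H1 [H2 H3]]].
      destruct (Hstep n H2) as [_ H4]. specialize (H4 H3).
      specialize (Hmono m n Hm H1). lia.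
    - destruct (Hinf m) as [n [H1 [H2 H3]]].
      destruct (Hstep n H2) as [_ H4]. specialize (H4 H3).
      specialize (Hmono m n Hm H1). apply (IHN (S n)); lia. }
  exact (Hfin _ k (le_n k) (le_n _)).
Qed.

Theorem mainTheorem16 (p : nat) :
  (exists (M : bmodel) (w : W M), is_BIGL M /\ ~ sat M w (phi16 p)) /\
  (forall x : label, ~ labIGL_provable (Seq [] [] (x, phi16 p))).
Proof.
  assert (Hf : ~ sat M0 Ww (phi16 p)).
  { simpl. intros H.
    destruct (H Ww I) as [v [Hv1 [Hv2 Hv3]]].
    - exists Vv; simpl; auto.
    - destruct v; simpl in *; try tauto.
      apply (Hv3 Vs Uu I I Uu I I). }
  split.
  - exists M0, Ww. split; [exact M0_BIGL|exact Hf].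
  - intros x. apply (not_provable_refuted _ (fun _ => Ww)).
    repeat split; simpl; try tauto.
Qed.
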